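(* Let $T_1$ and $T_2$ be $\pi$-increasing trees with disjoint vertex-sets, with $T_1$ irreducible. For $i=1,2$, let $m_i$ be the maximum element of $V(T_i)$. Let $v_2$ be a vertex of $T_2$ with $v_2<m_1$, and let $T=\mathrm{spl}(T_1,m_1;T_2,v_2)$. (a) If $m_1>m_2$, then $T$ is reducible; more precisely, $G_{m_1}(T)$ is the disjoint union $G_{m_1}(T_1)\sqcup G_{v_2}(T_2)$. (b) If $m_1<m_2$ and $T_2$ is irreducible, then $T$ is irreducible.
   Context: Standing assumptions: $r\ge2$ and $\pi$ is a set partition of $\{1,\dots,r\}$ having $\{1\}$ as a block; its blocks are $\pi_1,\dots,\pi_k$ with maxima $\mu_i=\max\pi_i$; $\pi^x$ denotes the block containing $x$. An unordered increasing tree is a rooted tree on distinct positive integers, sons unordered, each son larger than its father. A $\pi$-increasing tree is an unordered increasing tree $T$ whose vertex-set is a union of blocks of $\pi$ and such that for any two elements $i<j$ of a same block of $\pi$ contained in $V(T)$, $i$ is an ancestor of $j$ in $T$. $v$-decomposition: for a vertex $v$ of $T$ with chain $a_1<\dots<a_\ell=v$ from the root to $v$, removing the chain edges leaves components $T^{(a_j)}$ rooted at $a_j$. Splice: for unordered increasing trees $T_1,T_2$ with disjoint vertex-sets and $v_1\in V(T_1)$, $v_2\in V(T_2)$, $v_1>v_2$, $\mathrm{spl}(T_1,v_1;T_2,v_2)$ is the tree on $V(T_1)\cup V(T_2)$ obtained by merging the root-to-$v_1$ chain of $T_1$ and the root-to-$v_2$ chain of $T_2$ into one increasing chain (root = smallest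 element, ending at $v_1$) and attaching at each chain vertex its component from the $v_1$-decomposition of $T_1$ or the $v_2$-decomposition of $T_2$. $v$-dependence graph $G_v(T)$ of a $\pi$-increasing tree $T$: directed graph whose vertices are the blocks of $\pi$ contained in $V(T)$; for each such block $\pi_i$ whose maximum $\mu_i$ is not on the chain $a_1,\dots,a_\ell$ from the root to $v$, $\mu_i$ is a non-root vertex of a unique $T^{(a_j)}$ and there is an edge (possibly a loop) from $\pi_i$ to $\pi^{a_j}$; no other edges. A $\pi$-increasing tree with maximum vertex $M$ is irreducible if $G_M(T)$ is connected (ignoring directions), reducible otherwise. *)

(* Defs.v *)
From mathcomp Require Import all_boot.
Set Implicit Arguments. Unset Strict Implicit. Unset Printing Implicit Defensive.

(* Ground set {1,...,r} is represented inside 'I_(r.+1) (0 is never used). *)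
Definition ground (r : nat) : {set 'I_r.+1} := [set i : 'I_r.+1 | 0 < i].

(* A rooted tree with labelled vertices, given by its vertex set and a
   parent function (meaningful only on non-root vertices of V). *)
Record ptree (n : nat) := PTree { V : {set 'I_n}; par : 'I_n -> 'I_n }.
Arguments PTree {n}.

Section Trees.
Variable n : nat.
Implicit Types (T : ptree n.+1) (u v a : 'I_n.+1).

Definition root T : 'I_n.+1 := [arg min_(i < ord0 in V T) (i : nat)].
Definition vmax T : 'I_n.+1 := [arg max_(i > ord0 in V T) (i : nat)].

(* unordered increasing tree: nonempty, every non-root vertex has a
   parent in V which is smaller than it (hence root = min V and the
   parent map defines a rooted tree) *)
Definition increasing_tree T : Prop :=
  V T != set0 /\
  forall v, v \in V T -> v != root T -> (par T v \in V T) /\ (par T v < v).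

Definition up T (x : 'I_n.+1) : 'I_n.+1 := if x == root T then x else par T x.

Definition anc T a v : bool := [exists k : 'I_n.+2, iter k (up T) v == a].

Definition chain T v : {set 'I_n.+1} := [set a in V T | anc T a v].

Definition spl T1 v1 T2 v2 : ptree n.+1 :=
  let C := chain T1 v1 :|: chain T2 v2 in
  PTree (V T1 :|: V T2)
    (fun u => if u \in C then [arg max_(a > u | (a \in C) && (a < u)) (a : nat)]
              else if u \in V T1 then par T1 u else par T2 u).
End Trees.

Section PiTrees.
Variable r : nat.
Implicit Types (P : {set {set 'I_r.+1}}) (T : ptree r.+1) (v : 'I_r.+1).

Definition blocks P T : {set {set 'I_r.+1}} := [set B in P | B \subset V T].

Definition pi_increasing P T : Prop :=
  [/\ increasing_tree T,
      V T = \bigcup_(B in blocks P T) B &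
      forall B, B \in blocks P T -> forall i j, i \in B -> j \in B ->
        i < j -> anc T i j].

(* edge B -> C of the v-dependence graph G_v(T) *)
Definition gedge P T v (B C : {set 'I_r.+1}) : bool :=
  (B \in blocks P T) &&
  [exists m in B, [forall x in B, x <= m] && (m \notin chain T v) &&
     [exists a in chain T v,
        [&& anc T a m,
            [forall a' in chain T v, anc T a' m ==> (a' <= a)] &
            C == pblock P a]]].

Definition gconnected P T v : Prop :=
  forall B C, B \in blocks P T -> C \in blocks P T ->
    connect (fun X Y => gedge P T v X Y || gedge P T v Y X) B C.

Definition irreducible P T : Prop := gconnected P T (vmax T).
Definition reducible P T : Prop := ~ irreducible P T.
End PiTrees.

(* Main.v *)
Require Import Defs.
From mathcomp Require Import all_boot.
Import Defs.
Set Implicit Arguments. Unset Strict Implicit. Unset Printing Implicit Defensive.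

Lemma ext_nat_spec (I : finType) (i0 x : I) (P : pred I) (F : I -> nat) (ord : rel nat) :
  reflexive ord -> transitive ord -> total ord -> P x ->
  P (extremum ord i0 P F) /\ forall j, P j -> ord (F (extremum ord i0 P F)) (F j).
Proof.
move=> ordr ordt ordT Px.
rewrite /extremum; case: pickP => [i /andP[Pi /'forall_implyP/= min_i] | no_i].
  by split=> // j; apply/implyP.
case: (extremumP (i0:=x) F ordr ordt ordT Px) => i Pi min_i.
have := no_i i => /=; rewrite Pi /=.
move/negbT; rewrite negb_forall => /existsP[j]; rewrite negb_imply => /andP[Pj].
by rewrite min_i.
Qed.

Lemma argmin_spec (I : finType) (i0 x : I) (P : pred I) (F : I -> nat) :
  P x -> P [arg min_(i < i0 | P i) F i] /\ forall j, P j -> F [arg min_(i < i0 | P i) F i] <= F j.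
Proof. apply: ext_nat_spec => //; [exact: leq_trans|exact: leq_total]. Qed.

Lemma argmax_spec (I : finType) (i0 x : I) (P : pred I) (F : I -> nat) :
  P x -> P [arg max_(i > i0 | P i) F i] /\ forall j, P j -> F j <= F [arg max_(i > i0 | P i) F i].
Proof. apply: ext_nat_spec => //; [exact: leqnn| by move=> ??? h1 h2; apply: leq_trans h2 h1| by move=> ??; apply: leq_total]. Qed.

Lemma anc_fconnect n (T : ptree n.+1) a v : anc T a v = fconnect (up T) v a.
Proof.
apply/existsP/idP => [[k /eqP <-]|H]; first exact: fconnect_iter.
have Hk : findex (up T) v a < n.+2.
  apply: leq_trans (findex_max H) _.
  by rewrite /order; apply: leq_trans (max_card _) _; rewrite card_ord.
by exists (Ordinal Hk); rewrite /= iter_findex.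
Qed.


Lemma ord_ind m (Q : 'I_m -> Prop) :
  (forall u : 'I_m, (forall w : 'I_m, w < u -> Q w) -> Q u) -> forall u, Q u.
Proof.
move=> H.
suff: forall k (u : 'I_m), u < k -> Q u by move=> S u; apply: (S u.+1).
elim=> [//|k IH] u Hu; apply: H => w Hw; apply: IH; exact: leq_trans Hw Hu.
Qed.

Section FC.
Variables (T : finType) (f : T -> T).
Lemma fconE x y : fconnect f x y <-> x = y \/ fconnect f (f x) y.
Proof.
split.
  move/iter_findex; case: (findex f x y) => [/= ->|k]; first by left.
  by rewrite iterSr => <-; right; apply: fconnect_iter.
case=> [->|H]; first exact: connect0.
exact: connect_trans (fconnect1 f x) H.
Qed.
Lemma fcon_cmp v a b : fconnect f v a -> fconnect f v b ->
  fconnect f a b \/ fconnect f b a.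
Proof.
move=> /iter_findex Ha /iter_findex Hb.
case: (leqP (findex f v a) (findex f v b)) => H.
  left; rewrite -Hb -(subnK H) iterD Ha; exact: fconnect_iter.
right; rewrite -Ha -(subnK (ltnW H)) iterD Hb; exact: fconnect_iter.
Qed.
Lemma fcon_fix x y : f x = x -> fconnect f x y -> y = x.
Proof.
move=> fx /iter_findex <-; elim: (findex f x y) => //= k ->; exact: fx.
Qed.
End FC.

Section Tree.
Variables (n : nat) (T : ptree n.+1).
Hypothesis HT : increasing_tree T.

Lemma root_spec : root T \in V T /\ forall v, v \in V T -> root T <= v.
Proof.
case: HT => /set0Pn [x Hx] _.
exact: (argmin_spec ord0 (P := fun i => i \in V T) (fun i => nat_of_ord i) Hx).
Qed.
Lemma root_in : root T \in V T. Proof. by case: root_spec. Qed.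
Lemma root_min v : v \in V T -> root T <= v. Proof. by case: root_spec => _; apply. Qed.
Lemma vmax_spec : vmax T \in V T /\ forall v, v \in V T -> v <= vmax T.
Proof.
case: HT => /set0Pn [x Hx] _.
exact: (argmax_spec ord0 (P := fun i => i \in V T) (fun i => nat_of_ord i) Hx).
Qed.
Lemma vmax_in : vmax T \in V T. Proof. by case: vmax_spec. Qed.
Lemma vmax_max v : v \in V T -> v <= vmax T. Proof. by case: vmax_spec => _; apply. Qed.

Lemma up_root : up T (root T) = root T.
Proof. by rewrite /up eqxx. Qed.
Lemma up_in v : v \in V T -> up T v \in V T.
Proof. rewrite /up; case: ifP => // /negbT ne Hv; by case: HT => _ /(_ v Hv ne) []. Qed.
Lemma up_lt v : v \in V T -> v != root T -> up T v < v.
Proof. rewrite /up => Hv ne; rewrite (negbTE ne); by case: HT => _ /(_ v Hv ne) []. Qed.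
Lemma up_le v : v \in V T -> up T v <= v.
Proof.
move=> Hv; case: (eqVneq v (root T)) => [->|ne]; first by rewrite up_root.
exact: ltnW (up_lt Hv ne).
Qed.

Lemma anc_in v a : v \in V T -> fconnect (up T) v a -> a \in V T /\ a <= v.
Proof.
move=> Hv /iter_findex <-; elim: (findex _ v a) => [|k [IH1 IH2]] /=; first by [].
split; first exact: up_in.
exact: leq_trans (up_le IH1) IH2.
Qed.

Lemma anc_root v : v \in V T -> fconnect (up T) v (root T).
Proof.
elim/ord_ind: v => v IH Hv.
case: (eqVneq v (root T)) => [->|ne]; first exact: connect0.
apply/fconE; right; apply: IH; [exact: up_lt | exact: up_in].
Qed.

Lemma anc_le v a b : v \in V T -> fconnect (up T) v a -> fconnect (up T) v b ->
  b <= a -> fconnect (up T) a b.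
Proof.
move=> Hv Ha Hb ba; case: (fcon_cmp Ha Hb) => // H.
have [Ha' _] := anc_in Hv Ha.
have [_ ab] := anc_in (proj1 (anc_in Hv Hb)) H.
have -> : a = b by apply: val_inj; apply/eqP; rewrite eqn_leq ab ba.
exact: connect0.
Qed.
End Tree.


Lemma in_chain n (T : ptree n.+1) v a :
  (a \in chain T v) = (a \in V T) && fconnect (up T) v a.
Proof. by rewrite inE anc_fconnect. Qed.

Section Spl.
Variables (r : nat) (T1 T2 : ptree r.+1) (v2 : 'I_r.+1).
Hypotheses (H1 : increasing_tree T1) (H2 : increasing_tree T2)
  (Hd : [disjoint V T1 & V T2]) (Hv2 : v2 \in V T2) (Hlt : v2 < vmax T1).

Local Notation m1 := (vmax T1).
Local Notation T := (spl T1 m1 T2 v2).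
Local Notation C1 := (chain T1 m1).
Local Notation C2 := (chain T2 v2).
Local Notation C := (chain T1 m1 :|: chain T2 v2).

Lemma VT : V T = V T1 :|: V T2. Proof. by []. Qed.

Lemma C1_V a : a \in C1 -> a \in V T1. Proof. by rewrite in_chain => /andP[]. Qed.
Lemma C2_V a : a \in C2 -> a \in V T2. Proof. by rewrite in_chain => /andP[]. Qed.
Lemma C_V a : a \in C -> a \in V T.
Proof. by rewrite VT !in_setU => /orP[/C1_V->|/C2_V->]; rewrite ?orbT. Qed.
Lemma C_le a : a \in C -> a <= m1.
Proof.
rewrite in_setU !in_chain => /orP[/andP[_ H]|/andP[_ H]].
  exact: (anc_in H1 (vmax_in H1) H).2.
exact: leq_trans (anc_in H2 Hv2 H).2 (ltnW Hlt).
Qed.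
Lemma V1C a : a \in V T1 -> (a \in C) = (a \in C1).
Proof. move=> Ha; rewrite in_setU; case: (a \in C1) => //=; apply/negbTE; apply/negP => /C2_V; by rewrite (disjointFr Hd Ha). Qed.
Lemma V2C a : a \in V T2 -> (a \in C) = (a \in C2).
Proof. move=> Ha; rewrite in_setU; case: (a \in C2) (a \in C1) (@C1_V a) => [|] [|] //= /(_ isT) H; by rewrite (disjointFr Hd H) in Ha. Qed.

Lemma rootT1_C : root T1 \in C1.
Proof. by rewrite in_chain root_in // anc_root // vmax_in. Qed.
Lemma rootT2_C : root T2 \in C2.
Proof. by rewrite in_chain root_in // anc_root. Qed.

Lemma rootT_spec : root T \in V T /\ forall v, v \in V T -> root T <= v.
Proof.
have Hx : root T1 \in V T by rewrite VT inE root_in.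
exact: (argmin_spec ord0 (P := fun i => i \in V T) (fun i => nat_of_ord i) Hx).
Qed.
Lemma rootT_min v : v \in V T -> root T <= v. Proof. by case: rootT_spec => _; apply. Qed.
Lemma rootT_C : root T \in C.
Proof.
case: rootT_spec => Hr Hmin; move: Hr; rewrite VT inE => /orP[] Hr.
  have -> : root T = root T1.
    apply: val_inj; apply/eqP; rewrite eqn_leq (root_min H1 Hr) Hmin // VT inE root_in //.
  by rewrite inE rootT1_C.
have -> : root T = root T2.
  apply: val_inj; apply/eqP; rewrite eqn_leq (root_min H2 Hr) Hmin // VT inE root_in ?orbT //.
by rewrite inE rootT2_C orbT.
Qed.

Lemma up_C u : u \in C -> u != root T ->
  [/\ up T u \in C, up T u < u & forall a, a \in C -> a < u -> a <= up T u].
Proof.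
move=> Hu ne; rewrite /up (negbTE ne) /= Hu.
have Hx : (root T \in C) && (root T < u).
  rewrite rootT_C ltn_neqAle rootT_min ?C_V // andbT.
  by apply/negP => /eqP/val_inj E; rewrite E eqxx in ne.
have [/andP[A B] D] := argmax_spec u (P := fun a => (a \in C) && (a < u)) (fun i => nat_of_ord i) Hx.
split => // a Ha au; apply: D; by rewrite Ha.
Qed.

Lemma up_V1 u : u \in V T1 -> u \notin C -> up T u = up T1 u.
Proof.
move=> Hu nC.
have ne : u != root T by apply: contraNneq nC => ->; exact: rootT_C.
have ne1 : u != root T1 by apply: contraNneq nC => ->; rewrite inE rootT1_C.
by rewrite /up (negbTE ne) (negbTE ne1) /= (negbTE nC) Hu.
Qed.
Lemma up_V2 u : u \in V T2 -> u \notin C -> up T u = up T2 u.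
Proof.
move=> Hu nC.
have ne : u != root T by apply: contraNneq nC => ->; exact: rootT_C.
have ne2 : u != root T2 by apply: contraNneq nC => ->; rewrite inE rootT2_C orbT.
by rewrite /up (negbTE ne) (negbTE ne2) /= (negbTE nC) (disjointFl Hd Hu).
Qed.

Lemma K_C u a : u \in C -> (fconnect (up T) u a <-> (a \in C) /\ a <= u).
Proof.
elim/ord_ind: u a => u IH a Hu.
case: (eqVneq u (root T)) => [E|ne].
  split.
    move=> H; have fx : up T u = u by rewrite E /up eqxx.
    by rewrite (fcon_fix fx H).
  case=> Ha au; have : root T <= a by apply: rootT_min; apply: C_V.
  rewrite -E => ua; have -> : a = u by apply: val_inj; apply/eqP; rewrite eqn_leq au ua.
  exact: connect0.
have [Cp pu pmax] := up_C Hu ne.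
have E1 := fconE (up T) u a; have E2 := IH _ pu a Cp; split.
  move/E1 => [<-|/E2 [Ha ap]]; first by [].
  by split=> //; apply: leq_trans ap (ltnW pu).
case=> Ha au; apply/E1; case: (eqVneq u a) => [->|ne']; first by left.
right; apply/E2; split=> //; apply: pmax => //; rewrite ltn_neqAle au andbT.
by apply: contra ne' => /eqP E; apply/eqP; apply: val_inj.
Qed.
End Spl.


Section Kgen.
Variables (r : nat) (T Ti : ptree r.+1) (vi : 'I_r.+1) (C : {set 'I_r.+1}).
Hypotheses (Hi : increasing_tree Ti) (Hvi : vi \in V Ti)
  (KC : forall u a, u \in C -> (fconnect (up T) u a <-> (a \in C) /\ a <= u))
  (hC : forall u, u \in V Ti -> (u \in C) = (u \in chain Ti vi))
  (hup : forall u, u \in V Ti -> u \notin C -> up T u = up Ti u).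

Lemma K_gen u : u \in V Ti -> exists e,
  [/\ e \in chain Ti vi, fconnect (up Ti) u e,
      (forall x, x \in chain Ti vi -> fconnect (up Ti) u x -> x <= e) &
      (forall a, fconnect (up T) u a <-> fconnect (up Ti) u a \/ ((a \in C) /\ a <= e))].
Proof.
elim/ord_ind: u => u IH Hu.
case Cu: (u \in chain Ti vi).
  have uvi : fconnect (up Ti) vi u by move: Cu; rewrite in_chain => /andP[].
  exists u; split; [by [] | exact: connect0 | by move=> x _ /(anc_in Hi Hu) [] |].
  have CuC : u \in C by rewrite hC.
  move=> a; have K := KC a CuC; split; first by move/K => H; right.
  case=> [H|/K //]; apply/K; have [Ha au] := anc_in Hi Hu H; split=> //.
  by rewrite hC // in_chain Ha (connect_trans uvi H).
have ne : u != root Ti by apply: contraFneq Cu => ->; rewrite in_chain root_in // anc_root.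
have pu := up_lt Hi Hu ne; have Hp := up_in Hi Hu.
have [e [Ce pe emax Hiff]] := IH _ pu Hp.
have nC : u \notin C by rewrite hC // Cu.
exists e; split => //.
- exact: connect_trans (fconnect1 _ _) pe.
- move=> x Cx /(fconE (up Ti)) [E|H]; last exact: emax.
  by rewrite E Cx in Cu.
- move=> a; have E1 := fconE (up T) u a; have E2 := fconE (up Ti) u a.
  rewrite hup // in E1; split.
  + move=> H; case: (proj1 E1 H) => [<-|H']; first by left; exact: connect0.
    case: (proj1 (Hiff a) H') => [H''|H'']; last by right.
    by left; apply: (proj2 E2); right.
  + case=> [H|H]; apply: (proj2 E1).
      case: (proj1 E2 H) => [->|H']; first by left.
      by right; apply: (proj2 (Hiff a)); left.
    by right; apply: (proj2 (Hiff a)); right.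
Qed.
End Kgen.


Definition GE r (P : {set {set 'I_r.+1}}) (T : ptree r.+1) v B Y : Prop :=
  B \in blocks P T /\ exists m, [/\ m \in B, (forall x, x \in B -> x <= m),
    m \notin chain T v &
    exists a, [/\ a \in chain T v, fconnect (up T) m a,
      (forall a', a' \in chain T v -> fconnect (up T) m a' -> a' <= a) &
      Y = pblock P a]].

Lemma gedgeE r (P : {set {set 'I_r.+1}}) (T : ptree r.+1) v B Y :
  reflect (GE P T v B Y) (gedge P T v B Y).
Proof.
apply: (iffP andP) => [[HB /existsP[m /andP[mB /andP[/andP[/forallP mx mc] /existsP[a /andP[ac /and3P[am /forallP amax /eqP ->]]]]]]] | [HB [m [mB mx mc [a [ac am amax ->]]]]]].
  split=> //; exists m; split=> //.
    by move=> x xB; move: (mx x); rewrite xB.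
  exists a; split=> //; first by rewrite -anc_fconnect.
  by move=> a' a'c H; move: (amax a'); rewrite a'c /= anc_fconnect H.
split=> //; apply/existsP; exists m; rewrite mB mc /= andbT.
apply/andP; split; first by apply/forallP => x; apply/implyP; exact: mx.
apply/existsP; exists a; rewrite ac /= anc_fconnect am eqxx andbT /=.
apply/forallP => a'; apply/implyP => a'c; apply/implyP => H; apply: amax a'c _.
by rewrite -anc_fconnect.
Qed.


Lemma conn_back (X : finType) (e : rel X) (Q : X -> Prop) x y :
  connect e x y -> Q y -> (forall a b, e a b -> Q b -> Q a) -> Q x.
Proof.
move/connectP => [p Hp ->] Qy step; elim: p x Hp Qy => //= z p IH x /andP[exz Hp] Ql.
exact: step exz (IH _ Hp Ql).
Qed.

Lemma max_in (m : nat) (X : {set 'I_m}) x : x \in X ->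
  exists mx, mx \in X /\ forall y, y \in X -> y <= mx.
Proof.
move=> Hx; have [A B] := argmax_spec x (P := fun i => i \in X) (fun i => nat_of_ord i) Hx.
by eexists; split; [exact: A | exact: B].
Qed.

Section Same.
Variables (r : nat) (P : {set {set 'I_r.+1}}) (T Ti : ptree r.+1) (vi w : 'I_r.+1)
  (C : {set 'I_r.+1}) (B : {set 'I_r.+1}).
Hypotheses (Hi : increasing_tree Ti)
  (KK : forall u, u \in V Ti -> exists e,
  [/\ e \in chain Ti vi, fconnect (up Ti) u e,
      (forall x, x \in chain Ti vi -> fconnect (up Ti) u x -> x <= e) &
      (forall a, fconnect (up T) u a <-> fconnect (up Ti) u a \/ ((a \in C) /\ a <= e))])
  (hC : forall u, u \in V Ti -> (u \in C) = (u \in chain Ti vi))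
  (chT : forall a, (a \in chain T w) = (a \in C))
  (HB : B \in blocks P Ti) (HBT : B \in blocks P T).

Lemma gedge_same Y : gedge P T w B Y = gedge P Ti vi B Y.
Proof.
have BV : forall x, x \in B -> x \in V Ti.
  by move: HB; rewrite inE => /andP[_ /subsetP].
apply/gedgeE/gedgeE.
  move=> [_ [m [mB mx mc [a [ac am amax ->]]]]].
  have mV := BV _ mB; have [e [Ce me emax Km]] := KK mV.
  have ea : e <= a.
    apply: amax; first by rewrite chT hC ?Ce //; exact: (proj1 (anc_in Hi mV me)).
    by apply/Km; right; rewrite hC ?Ce //; exact: (proj1 (anc_in Hi mV me)).
  have ae : a <= e.
    case: (proj1 (Km a) am) => [h|[]] //.
    have aV := proj1 (anc_in Hi mV h).
    by apply: emax h; rewrite -hC // -chT.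
  have -> : a = e by apply: val_inj; apply/eqP; rewrite eqn_leq ae ea.
  split=> //; exists m; split=> //; first by rewrite -hC // -chT.
  exists e; split=> //.
move=> [_ [m [mB mx mc [a [ac am amax ->]]]]].
have mV := BV _ mB; have [e [Ce me emax Km]] := KK mV.
have aV : a \in V Ti by move: ac; rewrite in_chain => /andP[].
split=> //; exists m; split=> //; first by rewrite chT hC.
exists a; split=> //; first by rewrite chT hC.
  by apply/Km; left.
move=> a' a'c /Km [h|[_ a'e]].
  have a'V := proj1 (anc_in Hi mV h).
  by apply: amax h; rewrite -hC // -chT.
apply: leq_trans a'e _; exact: amax Ce me.
Qed.
End Same.


Section Main.
Variables (r : nat) (P : {set {set 'I_r.+1}}) (T1 T2 : ptree r.+1) (v2 : 'I_r.+1).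
Hypotheses (HP : partition P (ground r)) (HT1 : pi_increasing P T1)
  (HT2 : pi_increasing P T2) (Hd : [disjoint V T1 & V T2])
  (Hv2 : v2 \in V T2) (Hlt : v2 < vmax T1).

Local Notation m1 := (vmax T1).
Local Notation T := (spl T1 m1 T2 v2).
Local Notation C1 := (chain T1 m1).
Local Notation C2 := (chain T2 v2).
Local Notation C := (chain T1 m1 :|: chain T2 v2).

Lemma H1 : increasing_tree T1. Proof. by case: HT1. Qed.
Lemma H2 : increasing_tree T2. Proof. by case: HT2. Qed.
Lemma triv : trivIset P. Proof. by case/and3P: HP. Qed.
Lemma P0 : set0 \notin P. Proof. by case/and3P: HP. Qed.

Lemma pblockV (Ti : ptree r.+1) x : pi_increasing P Ti -> x \in V Ti ->
  pblock P x \in blocks P Ti /\ x \in pblock P x.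
Proof.
case=> _ EV _ Hx; move: Hx; rewrite EV => /bigcupP[B HB xB].
have := HB; rewrite inE => /andP[BP _].
by rewrite (def_pblock triv BP xB).
Qed.

Lemma blocks_sub (Ti : ptree r.+1) B x : B \in blocks P Ti -> x \in B -> x \in V Ti.
Proof. by rewrite inE => /andP[_ /subsetP]; apply. Qed.

Lemma blocksT : blocks P T = blocks P T1 :|: blocks P T2.
Proof.
apply/setP => B; rewrite !inE /=.
case BP: (B \in P) => //=.
apply/idP/idP.
  move=> sB; have : B != set0 by apply: contraNneq P0 => <-.
  case/set0Pn => x xB; move: (subsetP sB x xB); rewrite inE => /orP[] xV.
    have [HB _] := pblockV HT1 xV; rewrite (def_pblock triv BP xB) in HB.
    by move: HB; rewrite inE => /andP[_ ->].
  have [HB _] := pblockV HT2 xV; rewrite (def_pblock triv BP xB) in HB.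
  by move: HB; rewrite inE => /andP[_ ->]; rewrite orbT.
by case/orP => sB; apply: subset_trans sB _; [exact: subsetUl | exact: subsetUr].
Qed.

Lemma blocks_disj : [disjoint blocks P T1 & blocks P T2].
Proof.
rewrite disjoint_subset; apply/subsetP => B HB1; rewrite inE; apply/negP => HB2.
have BP : B \in P by move: HB1; rewrite inE => /andP[].
have : B != set0 by apply: contraNneq P0 => <-.
case/set0Pn => x xB.
by move: (blocks_sub HB2 xB); rewrite (disjointFr Hd (blocks_sub HB1 xB)).
Qed.

Lemma K1 u : u \in V T1 -> exists e,
  [/\ e \in C1, fconnect (up T1) u e,
      (forall x, x \in C1 -> fconnect (up T1) u x -> x <= e) &
      (forall a, fconnect (up T) u a <-> fconnect (up T1) u a \/ ((a \in C) /\ a <= e))].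
Proof.
apply: K_gen; [exact: H1 | exact: vmax_in H1 | exact: K_C H1 H2 Hv2 | |].
  by move=> u' Hu; exact: V1C v2 Hd u' Hu.
exact: up_V1 H1 H2 Hv2.
Qed.

Lemma K2 u : u \in V T2 -> exists e,
  [/\ e \in C2, fconnect (up T2) u e,
      (forall x, x \in C2 -> fconnect (up T2) u x -> x <= e) &
      (forall a, fconnect (up T) u a <-> fconnect (up T2) u a \/ ((a \in C) /\ a <= e))].
Proof.
apply: K_gen; [exact: H2 | exact: Hv2 | exact: K_C H1 H2 Hv2 | |].
  by move=> u' Hu; exact: V2C v2 Hd u' Hu.
exact: up_V2 H1 H2 Hd Hv2.
Qed.

Lemma vmaxT_spec : vmax T \in V T /\ forall v, v \in V T -> v <= vmax T.
Proof.
have Hx : m1 \in V T by rewrite /= inE (vmax_in H1).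
exact: (argmax_spec ord0 (P := fun i => i \in V T) (fun i => nat_of_ord i) Hx).
Qed.


Lemma m1C : m1 \in C.
Proof. by rewrite inE in_chain (vmax_in H1) connect0. Qed.

Lemma chainT_m1 a : (a \in chain T m1) = (a \in C).
Proof.
rewrite in_chain; apply/idP/idP.
  by case/andP => _ /(K_C H1 H2 Hv2 _ m1C) [].
move=> aC; rewrite (C_V aC) /=; apply/(K_C H1 H2 Hv2 a m1C); split => //.
exact: C_le H1 H2 Hv2 Hlt a aC.
Qed.

Lemma partA_gedge B Y :
  gedge P T m1 B Y = gedge P T1 m1 B Y || gedge P T2 v2 B Y.
Proof.
case HB1: (B \in blocks P T1).
  have nB2 : (B \in blocks P T2) = false by rewrite (disjointFr blocks_disj HB1).
  have -> : gedge P T2 v2 B Y = false by apply/negP => /gedgeE []; rewrite nB2.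
  rewrite orbF; apply: (gedge_same H1 K1 _ chainT_m1 HB1).
    by move=> u Hu; exact: V1C v2 Hd u Hu.
  by rewrite blocksT inE HB1.
case HB2: (B \in blocks P T2).
  have -> : gedge P T1 m1 B Y = false by apply/negP => /gedgeE []; rewrite HB1.
  rewrite /=; apply: (gedge_same H2 K2 _ chainT_m1 HB2).
    by move=> u Hu; exact: V2C v2 Hd u Hu.
  by rewrite blocksT inE HB2 orbT.
have -> : gedge P T1 m1 B Y = false by apply/negP => /gedgeE []; rewrite HB1.
have -> : gedge P T2 v2 B Y = false by apply/negP => /gedgeE []; rewrite HB2.
by apply/negP => /gedgeE []; rewrite blocksT inE HB1 HB2.
Qed.

Lemma vmaxT1 : vmax T2 < m1 -> vmax T = m1.
Proof.
move=> lt21; have [vin vmx] := vmaxT_spec.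
apply: val_inj; apply/eqP; rewrite eqn_leq vmx ?andbT; last by rewrite /= inE (vmax_in H1).
move: vin; rewrite /= inE => /orP[] h; first exact: vmax_max H1 _ h.
exact: ltnW (leq_ltn_trans (vmax_max H2 h) lt21).
Qed.

Lemma partA_inv X Y : gedge P T m1 X Y -> (X \in blocks P T1) = (Y \in blocks P T1).
Proof.
rewrite partA_gedge => /orP[/gedgeE [HX [m [_ _ _ [a [ac _ _ ->]]]]] | /gedgeE [HX [m [_ _ _ [a [ac _ _ ->]]]]]].
  by rewrite HX (pblockV HT1 (C1_V ac)).1.
have aV : a \in V T2 by move: ac; rewrite in_chain => /andP[].
by rewrite (disjointFl blocks_disj HX) (disjointFl blocks_disj (pblockV HT2 aV).1).
Qed.

Lemma partA_red : vmax T2 < m1 -> reducible P T.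
Proof.
move=> lt21; rewrite /reducible /irreducible (vmaxT1 lt21) => irr.
have [HX1 _] := pblockV HT1 (vmax_in H1); have [HX2 _] := pblockV HT2 Hv2.
have HT1' : pblock P m1 \in blocks P T by rewrite blocksT inE HX1.
have HT2' : pblock P v2 \in blocks P T by rewrite blocksT inE HX2 orbT.
have C12 := irr _ _ HT1' HT2'.
have := conn_back (Q := fun X => (X \in blocks P T1) = false) C12
  (disjointFl blocks_disj HX2).
rewrite HX1 => K; suff: true = false by [].
apply: K => a b /orP[] h Qb.
  by rewrite (partA_inv h).
by rewrite -(partA_inv h).
Qed.


Lemma C2_le x y : x \in C2 -> y \in C2 -> x <= y -> fconnect (up T2) y x.
Proof.
rewrite !in_chain => /andP[_ hx] /andP[_ hy] xy.
exact: (anc_le H2 Hv2 hy hx xy).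
Qed.

Lemma partB : irreducible P T1 -> m1 < vmax T2 -> irreducible P T2 -> irreducible P T.
Proof.
move=> irr1 lt12 irr2.
set m2 := vmax T2.
have Hm2 : m2 \in V T2 := vmax_in H2.
have vmT : vmax T = m2.
  have [vin vmx] := vmaxT_spec.
  apply: val_inj; apply/eqP; rewrite eqn_leq vmx ?andbT; last by rewrite /= inE Hm2 orbT.
  move: vin; rewrite /= inE => /orP[] h; last exact: vmax_max H2 _ h.
  exact: ltnW (leq_ltn_trans (vmax_max H1 h) lt12).
have [c [Cc m2c cmax Km2]] := K2 Hm2.
have cV : c \in V T2 by move: Cc; rewrite in_chain => /andP[].
have cC : c \in C by rewrite inE Cc orbT.
have chT : forall a, a \in chain T m2 <-> fconnect (up T2) m2 a \/ ((a \in C) /\ a <= c).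
  move=> a; rewrite in_chain; split.
    by case/andP => _ /Km2.
  move=> h; apply/andP; split; last exact/Km2.
  case: h => [h|[aC _]]; last exact: C_V aC.
  by rewrite /= inE (proj1 (anc_in H2 Hm2 h)) orbT.
have cv2 : c <= v2 by move: Cc; rewrite in_chain => /andP[_ /(anc_in H2 Hv2) []].
have E2 : forall X Y, gedge P T2 m2 X Y -> gedge P T m2 X Y.
  move=> X Y /gedgeE [HX [m [mX mx mc [a [ac am amax ->]]]]].
  have mV := blocks_sub HX mX.
  have [d [Cd md dmax Km]] := K2 mV.
  apply/gedgeE; split; first by rewrite blocksT inE HX orbT.
  exists m; split=> //.
    apply/negP => /chT [h|[mC mc']]; first by rewrite in_chain mV h in mc.
    have mC2 : m \in C2 by rewrite -(V2C v2 Hd mV).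
    by rewrite in_chain mV (connect_trans m2c (C2_le mC2 Cc mc')) in mc.
  exists a; split=> //.
  - apply/chT; left; by move: ac; rewrite in_chain => /andP[].
  - by apply/Km; left.
  suff key : forall a', fconnect (up T2) m2 a' -> fconnect (up T2) m a' -> a' <= a.
    move=> a' /chT ha' /Km hm.
    case: ha' => [h|[a'C a'c]]; case: hm => [h'|[a'C' a'd]].
    + exact: key.
    + have a'V := proj1 (anc_in H2 Hm2 h).
      have a'C2 : a' \in C2 by rewrite -(V2C v2 Hd a'V).
      exact: key h (connect_trans md (C2_le a'C2 Cd a'd)).
    + have a'V := proj1 (anc_in H2 mV h').
      have a'C2 : a' \in C2 by rewrite -(V2C v2 Hd a'V).
      exact: key (connect_trans m2c (C2_le a'C2 Cc a'c)) h'.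
    + case: (leqP c d) => cd.
        apply: leq_trans a'c _.
        exact: (key c m2c (connect_trans md (C2_le Cc Cd cd))).
      apply: leq_trans a'd _.
      exact: (key d (connect_trans m2c (C2_le Cd Cc (ltnW cd))) md).
  move=> a' h h'; apply: amax h'.
  by rewrite in_chain h (proj1 (anc_in H2 Hm2 h)).
have GL : forall X m y, X \in blocks P T1 -> m \in X -> (forall x, x \in X -> x <= m) ->
    y \in C1 -> fconnect (up T1) m y -> c < y -> gedge P T m2 X (pblock P c).
  move=> X m y HX mX mx Cy my cy.
  have mV := blocks_sub HX mX.
  have [e [Ce me emax Km]] := K1 mV.
  apply/gedgeE; split; first by rewrite blocksT inE HX.
  exists m; split=> //.
    apply/negP => /chT [h|[mC mc']].
      by move: (proj1 (anc_in H2 Hm2 h)); rewrite (disjointFr Hd mV).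
    have := leq_ltn_trans (proj2 (anc_in H1 mV my)) (leq_ltn_trans mc' cy).
    by rewrite ltnn.
  exists c; split=> //.
  - by apply/chT; right.
  - apply/Km; right; split=> //; apply: ltnW; exact: leq_trans cy (emax _ Cy my).
  move=> a' /chT [h|[_ //]] /Km [h'|[a'C _]].
    by move: (proj1 (anc_in H2 Hm2 h)); rewrite (disjointFr Hd (proj1 (anc_in H1 mV h'))).
  have a'V := proj1 (anc_in H2 Hm2 h).
  by apply: cmax h; rewrite -(V2C v2 Hd a'V).
have E1 : forall X Y, gedge P T1 m1 X Y ->
    gedge P T m2 X Y \/ (gedge P T m2 X (pblock P c) /\ gedge P T m2 Y (pblock P c)).
  move=> X Y /gedgeE [HX [m [mX mx mc [a [ac am amax ->]]]]].
  have mV := blocks_sub HX mX.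
  have aV := C1_V ac.
  have [e [Ce me emax Km]] := K1 mV.
  have ea : e <= a by apply: amax Ce me.
  have ae : a <= e by apply: emax ac am.
  have Eae : a = e by apply: val_inj; apply/eqP; rewrite eqn_leq ae ea.
  case: (ltngtP a c) => [lac|lca|eac].
  - left; apply/gedgeE; split; first by rewrite blocksT inE HX.
    exists m; split=> //.
      apply/negP => /chT [h|[mC _]].
        by move: (proj1 (anc_in H2 Hm2 h)); rewrite (disjointFr Hd mV).
      by rewrite -(V1C v2 Hd mV) mC in mc.
    exists a; split=> //.
    + by apply/chT; right; split; [rewrite inE ac | exact: ltnW].
    + by apply/Km; left.
    move=> a' /chT ha' /Km [h'|[_ a'e]]; last by rewrite Eae.
    have a'V := proj1 (anc_in H1 mV h').
    case: ha' => [h|[a'C _]].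
      by move: (proj1 (anc_in H2 Hm2 h)); rewrite (disjointFr Hd a'V).
    by apply: amax h'; rewrite -(V1C v2 Hd a'V).
  - right; split; first exact: GL mX mx ac am lca.
    have [HY aY] := pblockV HT1 aV.
    have [mY [mYY mYx]] := max_in aY.
    apply: (GL _ _ _ HY mYY mYx ac _ lca).
    case: (eqVneq a mY) => [<-|ne]; first exact: connect0.
    have : a < mY by rewrite ltn_neqAle mYx // andbT; apply: contra ne => /eqP E; apply/eqP; exact: val_inj.
    case: HT1 => _ _ /(_ _ HY a mY aY mYY) Hanc /Hanc.
    by rewrite anc_fconnect.
  - have ceq : a = c by apply: val_inj.
    by move: cV; rewrite -ceq (disjointFr Hd aV).
pose G := fun X Y => gedge P T m2 X Y || gedge P T m2 Y X.
have Gsym : connect_sym G by apply: sym_connect_sym => X Y; rewrite /G orbC.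
have [HB0 _] := pblockV HT2 Hv2.
set B0 := pblock P v2 in HB0.
have good2 : forall W, W \in blocks P T2 -> connect G W B0.
  move=> W HW; have := irr2 _ _ HW HB0.
  apply: connect_sub => X Y /orP[] h; apply: connect1; by rewrite /G (E2 _ _ h) ?orbT.
have goodc : connect G (pblock P c) B0 by apply: good2; exact: (pblockV HT2 cV).1.
have goode : forall X, gedge P T m2 X (pblock P c) -> connect G X B0.
  move=> X h; apply: connect_trans goodc; apply: connect1; by rewrite /G h.
have good1 : forall B, B \in blocks P T1 -> connect G B B0.
  move=> B HB.
  have [HX0 m1X0] := pblockV HT1 (vmax_in H1).
  have g0 : connect G (pblock P m1) B0.
    apply: goode; apply: (GL _ m1 m1 HX0 m1X0).
    - by move=> x xX; exact: (vmax_max H1 (blocks_sub HX0 xX)).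
    - by rewrite in_chain (vmax_in H1) connect0.
    - exact: connect0.
    - exact: leq_ltn_trans cv2 Hlt.
  apply: (conn_back (Q := fun X => connect G X B0) (irr1 _ _ HB HX0) g0) => a b /orP[] h gb.
    case: (E1 _ _ h) => [h'|[h' _]]; last exact: goode h'.
    by apply: connect_trans gb; apply: connect1; rewrite /G h'.
  case: (E1 _ _ h) => [h'|[_ h']]; last exact: goode h'.
  by apply: connect_trans gb; apply: connect1; rewrite /G h' orbT.
rewrite /irreducible vmT => X Y; rewrite blocksT !in_setU => HX HY.
have gX : connect G X B0 by case/orP: HX => h; [exact: good1 | exact: good2].
have gY : connect G Y B0 by case/orP: HY => h; [exact: good1 | exact: good2].
by apply: connect_trans gX _; rewrite Gsym.
Qed.

End Main.


Theorem lemma3p5 (r : nat) (P : {set {set 'I_r.+1}}) (T1 T2 : ptree r.+1)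
  (v2 : 'I_r.+1) :
  2 <= r ->
  partition P (ground r) ->
  [set (inord 1 : 'I_r.+1)] \in P ->
  pi_increasing P T1 -> pi_increasing P T2 ->
  [disjoint V T1 & V T2] ->
  irreducible P T1 ->
  v2 \in V T2 -> v2 < vmax T1 ->
  let T := spl T1 (vmax T1) T2 v2 in
  (vmax T2 < vmax T1 ->
     reducible P T /\
     [/\ blocks P T = blocks P T1 :|: blocks P T2,
         [disjoint blocks P T1 & blocks P T2] &
         forall B C, gedge P T (vmax T1) B C =
                     gedge P T1 (vmax T1) B C || gedge P T2 v2 B C]) /\
  (vmax T1 < vmax T2 -> irreducible P T2 -> irreducible P T).
Proof.
move=> _ HP _ HT1 HT2 Hd irr1 Hv2 Hlt T; split.
  move=> lt21; split; first exact: (partA_red HP HT1 HT2 Hd Hv2 Hlt lt21).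
  split.
  - exact: (@blocksT r P T1 T2 v2 HP HT1 HT2).
  - exact: (blocks_disj HP Hd).
  - exact: (partA_gedge HP HT1 HT2 Hd Hv2 Hlt).
move=> lt12 irr2; exact: (partB HP HT1 HT2 Hd Hv2 Hlt irr1 lt12 irr2).
Qed.
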